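(* If $\mathbf A=\langle A,\vee,0,\mathscr F\rangle$ is a semilattice with operators, then $\operatorname{Con}\mathbf A\cong\operatorname{Don}\mathbf A\cong\operatorname{Eon}\mathbf A$.
   Context: A semilattice with operators is a join semilattice with least element $0$ together with a set $\mathscr F$ of unary maps each preserving $\vee$ and $0$. A relation on $A$ is compatible if it is compatible with $\vee$ and with every $f\in\mathscr F$. $\operatorname{Con}\mathbf A$ is the lattice of congruences. $\operatorname{Don}\mathbf A$ is the lattice (under inclusion) of all reflexive, transitive, compatible relations $R$ such that $x\ge y$ implies $x\,R\,y$. $\operatorname{Eon}\mathbf A$ is the lattice of all reflexive, transitive, compatible relations $R$ such that (1) $x\,R\,y$ implies $x\le y$, and (2) if $x\le y\le z$ and $x\,R\,z$ then $x\,R\,y$. *)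

(* Defs.v *)
Set Implicit Arguments.

Record is_semilattice_with_operators (A : Type) (join : A -> A -> A) (zero : A)
  (F : (A -> A) -> Prop) : Prop := {
  join_assoc : forall x y z, join x (join y z) = join (join x y) z;
  join_comm  : forall x y, join x y = join y x;
  join_idem  : forall x, join x x = x;
  join_zero  : forall x, join zero x = x;
  op_join    : forall f, F f -> forall x y, f (join x y) = join (f x) (f y);
  op_zero    : forall f, F f -> f zero = zero
}.

Section Defs.
Variables (A : Type) (join : A -> A -> A) (zero : A) (F : (A -> A) -> Prop).

Definition sle (x y : A) : Prop := join x y = y.

Definition relation := A -> A -> Prop.

Definition reflexive (R : relation) := forall x, R x x.
Definition symmetric (R : relation) := forall x y, R x y -> R y x.
Definition transitive (R : relation) := forall x y z, R x y -> R y z -> R x z.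

Definition compatible (R : relation) : Prop :=
  (forall x y x' y', R x y -> R x' y' -> R (join x x') (join y y')) /\
  (forall f, F f -> forall x y, R x y -> R (f x) (f y)).

Definition is_con (R : relation) : Prop :=
  reflexive R /\ symmetric R /\ transitive R /\ compatible R.

Definition is_don (R : relation) : Prop :=
  reflexive R /\ transitive R /\ compatible R /\
  (forall x y, sle y x -> R x y).

Definition is_eon (R : relation) : Prop :=
  reflexive R /\ transitive R /\ compatible R /\
  (forall x y, R x y -> sle x y) /\
  (forall x y z, sle x y -> sle y z -> R x z -> R x y).

End Defs.

Definition rsub (A : Type) (R S : relation A) : Prop := forall x y, R x y -> S x y.

(* Order (= lattice) isomorphism between the families of relations P and Q,
   each ordered by inclusion. *)
Definition order_iso (A : Type) (P Q : relation A -> Prop) : Prop :=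
  exists (phi psi : relation A -> relation A),
    (forall R, P R -> Q (phi R)) /\
    (forall S, Q S -> P (psi S)) /\
    (forall R, P R -> psi (phi R) = R) /\
    (forall S, Q S -> phi (psi S) = S) /\
    (forall R R', P R -> P R' -> (rsub R R' <-> rsub (phi R) (phi R'))).

(* Main.v *)
Require Import Defs.
From Stdlib Require Import FunctionalExtensionality PropExtensionality.

Section S.
Variables (A : Type) (j : A -> A -> A) (zero : A) (F : (A -> A) -> Prop).
Hypothesis HA : is_semilattice_with_operators j zero F.

Let jA := join_assoc HA.
Let jC := join_comm HA.
Let jI := join_idem HA.

Lemma sle_l x y : sle j x (j x y).
Proof. unfold sle. rewrite jA, jI. reflexivity. Qed.
Lemma sle_r x y : sle j y (j x y).
Proof. rewrite jC. apply sle_l. Qed.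
Lemma sle_trans x y z : sle j x y -> sle j y z -> sle j x z.
Proof. unfold sle; intros H1 H2. rewrite <- H2, jA, H1. reflexivity. Qed.
Lemma sle_join a b c : sle j a c -> sle j b c -> sle j (j a b) c.
Proof. unfold sle; intros H1 H2. rewrite <- jA, H2, H1. reflexivity. Qed.

Lemma relfext (R S : relation A) : (forall x y, R x y <-> S x y) -> R = S.
Proof.
  intro H. apply functional_extensionality; intro x.
  apply functional_extensionality; intro y. apply propositional_extensionality. apply H.
Qed.

Lemma jl (R : relation A) : reflexive R -> compatible j F R ->
  forall c a b, R a b -> R (j c a) (j c b).
Proof. intros Hr [Hc _] c a b H. apply Hc; auto. Qed.

Lemma j4 x y x' y' : j (j x x') (j y y') = j (j x y) (j x' y').
Proof.
  rewrite <- !jA. f_equal. rewrite !jA. f_equal. apply jC.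
Qed.

Definition phi1 (R : relation A) : relation A := fun x y => R x (j x y).
Definition psi1 (R : relation A) : relation A := fun x y => R x y /\ R y x.
Definition phi2 (R : relation A) : relation A := fun x y => R x y /\ sle j x y.
Definition psi2 (R : relation A) : relation A := fun x y => R x (j x y).

Lemma don_char R : is_don j F R -> forall x y, R x y <-> R x (j x y).
Proof.
  intros [Hr [Ht [Hc Hge]]] x y. split; intro H.
  - pose proof (proj1 Hc x x x y (Hr x) H) as H'. rewrite jI in H'. exact H'.
  - apply Ht with (j x y); auto. apply Hge. apply sle_r.
Qed.

Lemma phi1_don R : is_con j F R -> is_don j F (phi1 R).
Proof.
  intros [Hr [Hs [Ht Hc]]]. unfold phi1. split; [|split; [|split]].
  - intro x. rewrite jI. apply Hr.
  - intros x y z H1 H2.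
    assert (H3 : R x (j x (j y z))).
    { apply Ht with (j x y); auto. rewrite jA.
      pose proof (jl _ Hr Hc x _ _ H2) as H4. rewrite jA in H4. exact H4. }
    pose proof (jl _ Hr Hc z _ _ H3) as H4.
    assert (E1 : j z (j x (j y z)) = j x (j y z)).
    { rewrite (jC z), <- !jA, jI. reflexivity. }
    rewrite E1, (jC z x) in H4. apply Hs in H4. apply Ht with (j x (j y z)); auto.
  - split.
    + intros x y x' y' H1 H2. cbv [phi1 psi2] in *. rewrite j4. apply (proj1 Hc); auto.
    + intros f Hf x y H. cbv [phi1 psi2] in *. rewrite <- (op_join HA _ Hf). apply (proj2 Hc); auto.
  - intros x y H. unfold sle in H. rewrite jC, H. apply Hr.
Qed.

Lemma psi1_con R : is_don j F R -> is_con j F (psi1 R).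
Proof.
  intros [Hr [Ht [Hc Hge]]]. unfold psi1. split; [|split; [|split]].
  - intro; auto.
  - intros x y [? ?]; auto.
  - intros x y z [? ?] [? ?]; split; eauto.
  - split.
    + intros x y x' y' [? ?] [? ?]; split; apply (proj1 Hc); auto.
    + intros f Hf x y [? ?]; split; apply (proj2 Hc); auto.
Qed.

Lemma phi2_eon R : is_don j F R -> is_eon j F (phi2 R).
Proof.
  intros HD. pose proof HD as [Hr [Ht [Hc Hge]]]. unfold phi2.
  split; [|split; [|split; [|split]]].
  - intro x; split; auto. unfold sle; apply jI.
  - intros x y z [? ?] [? ?]; split; eauto using sle_trans.
  - split.
    + intros x y x' y' [? H1] [? H2]; split. apply (proj1 Hc); auto.
      unfold sle in *. rewrite j4, H1, H2. reflexivity.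
    + intros f Hf x y [? H1]; split. apply (proj2 Hc); auto.
      unfold sle in *. rewrite <- (op_join HA _ Hf), H1. reflexivity.
  - intros x y [? ?]; auto.
  - intros x y z H1 H2 [H3 H4]. split; auto. apply Ht with z; auto.
Qed.

Lemma psi2_don R : is_eon j F R -> is_don j F (psi2 R).
Proof.
  intros [Hr [Ht [Hc [Hle Hcv]]]]. unfold psi2. split; [|split; [|split]].
  - intro x. rewrite jI. apply Hr.
  - intros x y z H1 H2.
    assert (H3 : R x (j x (j y z))).
    { apply Ht with (j x y); auto. rewrite jA.
      pose proof (jl _ Hr Hc x _ _ H2) as H4. rewrite jA in H4. exact H4. }
    apply Hcv with (j x (j y z)); auto. apply sle_l.
    apply sle_join. apply sle_l. rewrite jA. apply sle_r.
  - split.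
    + intros x y x' y' H1 H2. cbv [phi1 psi2] in *. rewrite j4. apply (proj1 Hc); auto.
    + intros f Hf x y H. cbv [phi1 psi2] in *. rewrite <- (op_join HA _ Hf). apply (proj2 Hc); auto.
  - intros x y H. unfold sle in H. rewrite jC, H. apply Hr.
Qed.

Lemma iso1 : order_iso (is_con j F) (is_don j F).
Proof.
  exists phi1, psi1. split; [|split; [|split; [|split]]].
  - apply phi1_don.
  - apply psi1_con.
  - intros R HR. pose proof HR as [Hr [Hs [Ht Hc]]]. apply relfext. intros x y.
    unfold psi1, phi1. split.
    + intros [H1 H2]. rewrite jC in H2. eauto.
    + intro H. pose proof (jl _ Hr Hc x _ _ H) as H1. rewrite jI in H1.
      pose proof (jl _ Hr Hc y _ _ (Hs _ _ H)) as H2. rewrite jI in H2. split; auto.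
  - intros S HS. pose proof HS as [Hr [Ht [Hc Hge]]]. apply relfext. intros x y.
    unfold psi1, phi1. rewrite (don_char _ HS x y). split.
    + intros [H _]; exact H.
    + intro H; split; auto. apply Hge. apply sle_l.
  - intros R R' HR HR'. unfold rsub, phi1. split; auto.
    intros H x y Hxy.
    pose proof HR as [Hr [Hs [Ht Hc]]]. pose proof HR' as [Hr' [Hs' [Ht' Hc']]].
    pose proof (jl _ Hr Hc x _ _ Hxy) as H1. rewrite jI in H1.
    pose proof (jl _ Hr Hc y _ _ (Hs _ _ Hxy)) as H2. rewrite jI in H2.
    apply H in H1. apply H in H2. rewrite jC in H2. eauto.
Qed.

Lemma iso2 : order_iso (is_don j F) (is_eon j F).
Proof.
  exists phi2, psi2. split; [|split; [|split; [|split]]].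
  - apply phi2_eon.
  - apply psi2_don.
  - intros R HR. apply relfext. intros x y. unfold psi2, phi2.
    rewrite (don_char _ HR x y). split; [intros [H _]; exact H| intro H; split; auto].
    apply sle_l.
  - intros S HS. pose proof HS as [Hr [Ht [Hc [Hle Hcv]]]]. apply relfext. intros x y.
    unfold psi2, phi2. split.
    + intros [H1 H2]. unfold sle in H2. rewrite H2 in H1. exact H1.
    + intro H. pose proof (Hle _ _ H) as H2. split; auto. unfold sle in H2. rewrite H2. exact H.
  - intros R R' HR HR'. unfold rsub, phi2. split.
    + intros H x y [? ?]; auto.
    + intros H x y Hxy. apply (don_char _ HR') . apply (don_char _ HR) in Hxy.
      apply (H _ _ (conj Hxy (sle_l x y))).
Qed.

End S.

Theorem lemma3p4 (A : Type) (join : A -> A -> A) (zero : A)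
  (F : (A -> A) -> Prop)
  (HA : is_semilattice_with_operators join zero F) :
  order_iso (is_con join F) (is_don join F) /\
  order_iso (is_don join F) (is_eon join F).
Proof. split; [exact (@iso1 _ _ _ _ HA) | exact (@iso2 _ _ _ _ HA)]. Qed.
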